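(* Let $p>3$ be a prime and $E$ a supersingular elliptic curve over $\mathbb{F}_{p^2}$ whose endomorphism ring corresponds under the Brandt--Sohn correspondence to a ternary quadratic form $F$ of discriminant $p$ (i.e. $\operatorname{End}(E)\cong\operatorname{Clf}^0(F)$). Let $c$ be a prime with $c<3p/16$. Then $F$ properly represents $2c$ if and only if $E$ is $\mathbb{Z}[\sqrt{-cp}]$-oriented or $\mathbb{Z}[\frac{1+\sqrt{-cp}}{2}]$-oriented.
   Context: For an imaginary quadratic order $O$, $E$ is $O$-oriented if there is an injective ring homomorphism $O\hookrightarrow\operatorname{End}(E)$ (for $O=\mathbb{Z}[\sqrt{-cp}]$ or $\mathbb{Z}[\frac{1+\sqrt{-cp}}2]$ this is equivalent to the existence of a $c$-isogeny $E\to E^p$, where $E^p$ is obtained by raising the coefficients of $E$ to the $p$-th power). Write $F(x,y,z)=2ax^2+2by^2+2cz^2+2uyz+2vxz+2wxy$ (integers), with discriminant $4abc+uvw-au^2-bv^2-cw^2$. $\operatorname{Clf}^0(F)=\mathbb{Z}+\mathbb{Z}i+\mathbb{Z}j+\mathbb{Z}k\subset B_{p,\infty}$ with $i^2=ui-bc$, $j^2=vj-ac$, $k^2=wk-ab$, $jk=a(u-i)$, $ki=b(v-j)$, $ij=c(w-k)$; $B_{p,\infty}$ is the quaternion algebra over $\mathbb{Q}$ ramified exactly at $p,\infty$. $F$ properly represents $n$ if $F(v)=n$ for some $v\in\mathbb{Z}^3$ with coprime entries. *)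

(* Defs.v *)
From mathcomp Require Import all_boot all_order all_algebra.
Set Implicit Arguments. Unset Strict Implicit. Unset Printing Implicit Defensive.
Import Order.TTheory GRing.Theory Num.Theory.
Local Open Scope ring_scope.

Record tform := TForm { fa : int; fb : int; fc : int; fu : int; fv : int; fw : int }.

Definition tform_eval (F : tform) (x y z : int) : int :=
  2 * fa F * x ^+ 2 + 2 * fb F * y ^+ 2 + 2 * fc F * z ^+ 2
  + 2 * fu F * y * z + 2 * fv F * x * z + 2 * fw F * x * y.

Definition tform_disc (F : tform) : int :=
  4 * fa F * fb F * fc F + fu F * fv F * fw F
  - fa F * fu F ^+ 2 - fb F * fv F ^+ 2 - fc F * fw F ^+ 2.

Definition tform_posdef (F : tform) : Prop :=
  forall x y z : int, (x, y, z) != (0, 0, 0) -> 0 < tform_eval F x y z.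

Definition properly_represents (F : tform) (n : int) : Prop :=
  exists x y z : int, gcdz (gcdz x y) z = 1 /\ tform_eval F x y z = n.

(* ---- The even Clifford algebra Clf^0(F) = Z + Zi + Zj + Zk ----
   An element (r, s, t, q) stands for r + s i + t j + q k.  Multiplication
   is the bilinear extension of
     i^2 = u i - bc,  j^2 = v j - ac,  k^2 = w k - ab,
     jk = a(u - i),   ki = b(v - j),   ij = c(w - k),
   together with the remaining products they force (conjugation rules):
     kj = -vw + a i + w j + v k,  ik = -uw + w i + b j + u k,
     ji = -uv + v i + u j + c k. *)
Definition clf := (int * int * int * int)%type.

Definition clf_add (x y : clf) : clf :=
  let: (r1, s1, t1, q1) := x in let: (r2, s2, t2, q2) := y in
  (r1 + r2, s1 + s2, t1 + t2, q1 + q2).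

Definition clf_scale (k : int) (x : clf) : clf :=
  let: (r, s, t, q) := x in (k * r, k * s, k * t, k * q).

Definition clf_one : clf := (1, 0, 0, 0).

Definition clf_mul (F : tform) (x y : clf) : clf :=
  let a := fa F in let b := fb F in let c := fc F in
  let u := fu F in let v := fv F in let w := fw F in
  let ii : clf := (- (b * c), u, 0, 0) in
  let jj : clf := (- (a * c), 0, v, 0) in
  let kk : clf := (- (a * b), 0, 0, w) in
  let jk : clf := (a * u, - a, 0, 0) in
  let ki : clf := (b * v, 0, - b, 0) in
  let ij : clf := (c * w, 0, 0, - c) in
  let kj : clf := (- (v * w), a, w, v) in
  let ik : clf := (- (u * w), w, b, u) in
  let ji : clf := (- (u * v), v, u, c) in
  let: (r1, s1, t1, q1) := x in let: (r2, s2, t2, q2) := y in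
  let sum := fun l : seq clf => foldr clf_add (0, 0, 0, 0) l in
  sum [:: clf_scale r1 y; clf_scale r2 (0, s1, t1, q1);
          clf_scale (s1 * s2) ii; clf_scale (s1 * t2) ij; clf_scale (s1 * q2) ik;
          clf_scale (t1 * s2) ji; clf_scale (t1 * t2) jj; clf_scale (t1 * q2) jk;
          clf_scale (q1 * s2) ki; clf_scale (q1 * t2) kj; clf_scale (q1 * q2) kk].

(* Z[sqrt(-D)]: (x, y) stands for x + y sqrt(-D). *)
Definition zsqrt_mul (D : int) (x y : int * int) : int * int :=
  (x.1 * y.1 - D * x.2 * y.2, x.1 * y.2 + x.2 * y.1).

(* Z[(1 + sqrt(-D))/2] (a ring only when D = 3 mod 4): (x, y) stands for
   x + y omega with omega^2 = omega - (1 + D)/4. *)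
Definition zomega_mul (D : int) (x y : int * int) : int * int :=
  (x.1 * y.1 - ((1 + D) %/ 4)%Z * x.2 * y.2, x.1 * y.2 + x.2 * y.1 + x.2 * y.2).

Definition pair_add (x y : int * int) : int * int := (x.1 + y.1, x.2 + y.2).

Definition inj_ring_hom_into_clf (F : tform) (mul : int * int -> int * int -> int * int)
    (f : int * int -> clf) : Prop :=
  [/\ f (1, 0) = clf_one,
      forall x y, f (pair_add x y) = clf_add (f x) (f y),
      forall x y, f (mul x y) = clf_mul F (f x) (f y)
    & injective f].

Definition oriented_sqrt (F : tform) (D : int) : Prop :=
  exists f, inj_ring_hom_into_clf F (zsqrt_mul D) f.

Definition oriented_omega (F : tform) (D : int) : Prop :=
  (D %% 4 = 3)%Z /\ exists f, inj_ring_hom_into_clf F (zomega_mul D) f.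

(* Main.v *)
Require Import Defs.
From mathcomp Require Import all_boot all_order all_algebra.
From mathcomp Require Import zify ring lra.
Import Order.TTheory GRing.Theory Num.Theory.
Local Open Scope ring_scope.

Section Ids.
Variable F : tform.
Local Notation a := (fa F). Local Notation b := (fb F). Local Notation c := (fc F).
Local Notation u := (fu F). Local Notation v := (fv F). Local Notation w := (fw F).

Definition Tr (s t q : int) : int := u * s + v * t + w * q.
Definition Nm (s t q : int) : int :=
  b * c * s ^+ 2 + a * c * t ^+ 2 + a * b * q ^+ 2 + (u * v - c * w) * s * t
  + (u * w - b * v) * s * q + (v * w - a * u) * t * q.
Definition A11 := 4 * b * c - u ^+ 2.
Definition A22 := 4 * a * c - v ^+ 2.
Definition A33 := 4 * a * b - w ^+ 2.
Definition A12 := u * v - 2 * c * w.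
Definition A13 := u * w - 2 * b * v.
Definition A23 := v * w - 2 * a * u.
Definition Gf (s t q : int) : int :=
  A11 * s ^+ 2 + A22 * t ^+ 2 + A33 * q ^+ 2 + 2 * A12 * s * t + 2 * A13 * s * q
  + 2 * A23 * t * q.
Definition Ay1 (s t q : int) := A11 * s + A12 * t + A13 * q.
Definition Ay2 (s t q : int) := A12 * s + A22 * t + A23 * q.
Definition Ay3 (s t q : int) := A13 * s + A23 * t + A33 * q.
Definition B1 (s t q : int) := 2 * c * t ^+ 2 - 2 * u * t * q + 2 * b * q ^+ 2.
Definition B2 (s t q : int) := 2 * c * s ^+ 2 - 2 * v * s * q + 2 * a * q ^+ 2.
Definition B3 (s t q : int) := 2 * b * s ^+ 2 - 2 * w * s * t + 2 * a * t ^+ 2.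
Definition e1 (r s t q : int) := - u * r - u ^+ 2 * s + 2 * b * c * s - c * w * t - b * v * q.
Definition e2 (r s t q : int) := - v * r - v ^+ 2 * t - c * w * s + 2 * a * c * t - a * u * q.
Definition e3 (r s t q : int) := - w * r - w ^+ 2 * q - b * v * s - a * u * t + 2 * a * b * q.

Lemma sqrE r s t q : clf_mul F (r, s, t, q) (r, s, t, q) =
  (r ^+ 2 - Nm s t q, (2 * r + Tr s t q) * s, (2 * r + Tr s t q) * t, (2 * r + Tr s t q) * q).
Proof. rewrite /clf_mul /Nm /Tr /=. congr (_, _, _, _); ring. Qed.

Lemma GE s t q : Gf s t q = 4 * Nm s t q - Tr s t q ^+ 2.
Proof. rewrite /Gf /Nm /Tr /A11 /A22 /A33 /A12 /A13 /A23; ring. Qed.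

Lemma Ay1E s t q : Ay1 s t q ^+ 2 = A11 * Gf s t q - 2 * tform_disc F * B1 s t q.
Proof. rewrite /Ay1 /Gf /B1 /tform_disc /A11 /A22 /A33 /A12 /A13 /A23; ring. Qed.
Lemma Ay2E s t q : Ay2 s t q ^+ 2 = A22 * Gf s t q - 2 * tform_disc F * B2 s t q.
Proof. rewrite /Ay2 /Gf /B2 /tform_disc /A11 /A22 /A33 /A12 /A13 /A23; ring. Qed.
Lemma Ay3E s t q : Ay3 s t q ^+ 2 = A33 * Gf s t q - 2 * tform_disc F * B3 s t q.
Proof. rewrite /Ay3 /Gf /B3 /tform_disc /A11 /A22 /A33 /A12 /A13 /A23; ring. Qed.
Lemma FAyE s t q : tform_eval F (Ay1 s t q) (Ay2 s t q) (Ay3 s t q) = 2 * tform_disc F * Gf s t q.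
Proof. rewrite /tform_eval /Ay1 /Ay2 /Ay3 /Gf /tform_disc /A11 /A22 /A33 /A12 /A13 /A23; ring. Qed.
Lemma Ay1e r s t q : Ay1 s t q = u * (2 * r + Tr s t q) + 2 * e1 r s t q.
Proof. rewrite /Ay1 /e1 /Tr /A11 /A12 /A13; ring. Qed.
Lemma Ay2e r s t q : Ay2 s t q = v * (2 * r + Tr s t q) + 2 * e2 r s t q.
Proof. rewrite /Ay2 /e2 /Tr /A22 /A12 /A23; ring. Qed.
Lemma Ay3e r s t q : Ay3 s t q = w * (2 * r + Tr s t q) + 2 * e3 r s t q.
Proof. rewrite /Ay3 /e3 /Tr /A33 /A13 /A23; ring. Qed.
Lemma F2E x y z : tform_eval F (2 * x) (2 * y) (2 * z) = 4 * tform_eval F x y z.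
Proof. rewrite /tform_eval; ring. Qed.
Lemma mulfE r s t q m1 m2 n1 n2 :
  clf_mul F (m1 + m2 * r, m2 * s, m2 * t, m2 * q) (n1 + n2 * r, n2 * s, n2 * t, n2 * q) =
  (m1 * n1 + (m1 * n2 + m2 * n1) * r + m2 * n2 * (r ^+ 2 - Nm s t q),
   (m1 * n2 + m2 * n1) * s + m2 * n2 * ((2 * r + Tr s t q) * s),
   (m1 * n2 + m2 * n1) * t + m2 * n2 * ((2 * r + Tr s t q) * t),
   (m1 * n2 + m2 * n1) * q + m2 * n2 * ((2 * r + Tr s t q) * q)).
Proof. rewrite /clf_mul /Nm /Tr /=. congr (_, _, _, _); ring. Qed.
End Ids.

Lemma dvd4 {p : nat} {x : int} : prime p -> (3 < p)%N ->
  (p%:Z %| 4 * x ^+ 2)%Z -> (p%:Z %| x)%Z.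
Proof.
move=> Pp p3; rewrite !dvdzE abszM abszX /= => H.
rewrite Euclid_dvdM // in H; case/orP: H => H.
  have := dvdn_leq (isT : (0 < 4)%N) H => p4.
  have E : p = 4%N by apply/eqP; rewrite eqn_leq p4 p3.
  by rewrite E in Pp.
by rewrite Euclid_dvdX // in H; case/andP: H.
Qed.

Lemma core (F : tform) (p c : nat) (x1 x2 x3 : int) : prime p -> (3 < p)%N -> prime c ->
  (p%:Z %| 4 * x1 ^+ 2)%Z -> (p%:Z %| 4 * x2 ^+ 2)%Z -> (p%:Z %| 4 * x3 ^+ 2)%Z ->
  tform_eval F x1 x2 x3 = 2 * c%:Z * p%:Z ^+ 2 -> properly_represents F (2 * c%:Z).
Proof.
move=> Pp p3 Pc d1 d2 d3 HF.
have {}d1 := divzK (dvd4 Pp p3 d1).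
have {}d2 := divzK (dvd4 Pp p3 d2).
have {}d3 := divzK (dvd4 Pp p3 d3).
set z1 := (x1 %/ p%:Z)%Z in d1; set z2 := (x2 %/ p%:Z)%Z in d2; set z3 := (x3 %/ p%:Z)%Z in d3.
have Fz : tform_eval F z1 z2 z3 = 2 * c%:Z.
  have pn0 : (p%:Z ^+ 2 != 0). by rewrite expf_neq0 //; apply/eqP => -[] E; rewrite E in Pp.
  apply: (mulIf pn0); rewrite -HF -d1 -d2 -d3 /tform_eval; ring.
exists z1, z2, z3; split => //.
have g1 := dvdz_gcdl (gcdz z1 z2) z3.
have g2 := dvdz_gcdr (gcdz z1 z2) z3.
have g11 := dvdz_trans g1 (dvdz_gcdl z1 z2).
have g12 := dvdz_trans g1 (dvdz_gcdr z1 z2).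
move: (divzK g11) (divzK g12) (divzK g2).
set g := gcdz (gcdz z1 z2) z3.
set w1 := (z1 %/ g)%Z; set w2 := (z2 %/ g)%Z; set w3 := (z3 %/ g)%Z.
move=> E1 E2 E3.
have Hc : c%:Z = g ^+ 2 * (fa F * w1 ^+ 2 + fb F * w2 ^+ 2 + fc F * w3 ^+ 2
     + fu F * w2 * w3 + fv F * w1 * w3 + fw F * w1 * w2).
  apply: (@mulfI _ 2) => //; rewrite -Fz -E1 -E2 -E3 /tform_eval; ring.
have : (g ^+ 2 %| c%:Z)%Z by rewrite Hc dvdz_mulr.
rewrite /g /gcdz dvdzE /=.
set n := gcdn _ _ => Hn.
have Hn' : (n %| c)%N by apply: dvdn_trans Hn; apply: dvdn_mulr.
clearbody n.
case/primeP: Pc => c1 /(_ _ Hn') /orP [/eqP -> //|/eqP En].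
subst n.
have H1 := dvdn_leq (ltnW c1) Hn.
have H2 : (c * 2 <= c * c)%N by rewrite leq_mul2l c1 orbT.
have H3 := leq_trans H2 H1.
move: H3 c1; clear; lia.
Qed.

Lemma f_int F mul f : inj_ring_hom_into_clf F mul f -> forall n, f (n, 0) = (n, 0, 0, 0).
Proof.
case=> f1 fadd _ _.
have f0 : f (0,0) = (0,0,0,0).
  have := fadd (0,0) (0,0); rewrite /pair_add /= addr0.
  case: (f (0,0)) => [[[r s] t] q] /= [] E1 E2 E3 E4; congr (_,_,_,_); lia.
have fS : forall n : nat, f (n%:Z, 0) = (n%:Z,0,0,0).
  elim=> [|n IH]; first exact f0.
  have E : (n.+1 : int) = n%:Z + 1 by lia.
  rewrite E -[0 in LHS](addr0 0) -[(_, _)]/(pair_add (n%:Z, 0) (1, 0)) fadd IH f1 /=.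
  by congr (_,_,_,_); rewrite addr0.
case=> [n|n]; first exact: fS.
have := fadd (Negz n, 0) (n.+1%:Z, 0); rewrite /pair_add /= addr0 fS.
have -> : Negz n + n.+1 = 0 by rewrite NegzE addNr.
rewrite f0 NegzE.
case: (f (_, 0)) => [[[r s] t] q] /= [] E1 E2 E3 E4; congr (_,_,_,_); lia.
Qed.

Lemma fwd (p c : nat) F x y z : tform_disc F = p%:Z -> (0 < c)%N ->
  tform_eval F x y z = 2 * c%:Z -> oriented_sqrt F (c%:Z * p%:Z).
Proof.
move=> Hd c0 Hf.
pose S1 := 2 * fa F * x + fw F * y + fv F * z.
pose S2 := fw F * x + 2 * fb F * y + fu F * z.
pose S3 := fv F * x + fu F * y + 2 * fc F * z.
pose R0 := -(fa F * fu F * x + fb F * fv F * y + fc F * fw F * z + fu F * fw F * y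
             + fu F * fv F * z + fv F * fw F * x).
have hh : 2 * R0 + Tr F S1 S2 S3 = 0 by rewrite /R0 /S1 /S2 /S3 /Tr; ring.
have Qc : fa F * x ^+ 2 + fb F * y ^+ 2 + fc F * z ^+ 2 + fu F * y * z + fv F * x * z
   + fw F * x * y = c%:Z.
  by apply: (@mulfI _ 2) => //; rewrite -Hf /tform_eval; ring.
have hN : R0 ^+ 2 - Nm F S1 S2 S3 = - (c%:Z * p%:Z).
  by rewrite -Hd -Qc /R0 /S1 /S2 /S3 /Nm /tform_disc; ring.
have Fs : x * S1 + y * S2 + z * S3 = 2 * c%:Z by rewrite -Hf /S1 /S2 /S3 /tform_eval; ring.
exists (fun m : int * int => (m.1 + m.2 * R0, m.2 * S1, m.2 * S2, m.2 * S3)).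
split.
- rewrite /clf_one /=; congr (_,_,_,_); ring.
- move=> [m1 m2] [n1 n2]; rewrite /pair_add /clf_add /=; congr (_,_,_,_); ring.
- move=> [m1 m2] [n1 n2].
  transitivity (clf_mul F (m1 + m2 * R0, m2 * S1, m2 * S2, m2 * S3) (n1 + n2 * R0, n2 * S1, n2 * S2, n2 * S3)); last by [].
  rewrite mulfE hN hh /zsqrt_mul /=; congr (_,_,_,_); ring.
- move=> [m1 m2] [n1 n2] /= [E1 E2 E3 E4].
  have Em : m2 = n2.
    apply/eqP; rewrite -subr_eq0; apply/negPn/negP => Hne.
    have /eqP : (m2 - n2) * S1 = 0 by rewrite mulrBl E2 subrr.
    rewrite mulf_eq0 (negbTE Hne) /= => /eqP S10.
    have /eqP : (m2 - n2) * S2 = 0 by rewrite mulrBl E3 subrr.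
    rewrite mulf_eq0 (negbTE Hne) /= => /eqP S20.
    have /eqP : (m2 - n2) * S3 = 0 by rewrite mulrBl E4 subrr.
    rewrite mulf_eq0 (negbTE Hne) /= => /eqP S30.
    move: Fs; rewrite S10 S20 S30 !mulr0 !addr0 => H; lia.
  subst m2; congr (_, _); exact: (addIr (n2 * R0)).
Qed.

Lemma bwd_sqrt (p c : nat) F f : prime p -> (3 < p)%N -> prime c -> tform_disc F = p%:Z ->
  inj_ring_hom_into_clf F (zsqrt_mul (c%:Z * p%:Z)) f -> properly_represents F (2 * c%:Z).
Proof.
move=> Pp p3 Pc Hd Hf.
have fI := f_int _ _ _ Hf.
case: Hf => f1 fadd fmul finj.
have := fmul (0,1) (0,1).
have -> : zsqrt_mul (c%:Z * p%:Z) (0,1) (0,1) = (-(c%:Z * p%:Z), 0).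
  by rewrite /zsqrt_mul /=; congr (_,_); ring.
rewrite fI.
case Ea: (f (0,1)) => [[[r s] t] q].
rewrite sqrE => -[H0 H1 H2 H3].
have nz : ~ (s = 0 /\ t = 0 /\ q = 0).
  case=> s0 [t0 q0].
  have : f (0,1) = f (r,0) by rewrite Ea fI s0 t0 q0.
  move/finj => -[_ H]; move: H; lia.
have hh : 2 * r + Tr F s t q = 0.
  apply/eqP; apply/negPn/negP => Hne; apply: nz.
  have k : forall x, 0 = (2 * r + Tr F s t q) * x -> x = 0.
    by move=> x Hx; apply: (mulfI Hne); rewrite mulr0 -Hx.
  by split; [exact: k H1 | split; [exact: k H2 | exact: k H3]].
have HT : Tr F s t q = - (2 * r) by move: hh; lia.
have HN : Nm F s t q = r ^+ 2 + c%:Z * p%:Z.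
  by rewrite -[c%:Z * p%:Z]opprK H0; ring.
have HG : Gf F s t q = 4 * (c%:Z * p%:Z) by rewrite GE HN HT; ring.
have A1 : Ay1 F s t q = 2 * e1 F r s t q by rewrite (Ay1e F r) hh mulr0 add0r.
have A2 : Ay2 F s t q = 2 * e2 F r s t q by rewrite (Ay2e F r) hh mulr0 add0r.
have A3 : Ay3 F s t q = 2 * e3 F r s t q by rewrite (Ay3e F r) hh mulr0 add0r.
have d1 : (p%:Z %| 4 * e1 F r s t q ^+ 2)%Z.
  have -> : 4 * e1 F r s t q ^+ 2 = Ay1 F s t q ^+ 2 by rewrite A1; ring.
  rewrite Ay1E HG Hd; apply/dvdzP; exists (A11 F * 4 * c%:Z - 2 * B1 F s t q); ring.
have d2 : (p%:Z %| 4 * e2 F r s t q ^+ 2)%Z.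
  have -> : 4 * e2 F r s t q ^+ 2 = Ay2 F s t q ^+ 2 by rewrite A2; ring.
  rewrite Ay2E HG Hd; apply/dvdzP; exists (A22 F * 4 * c%:Z - 2 * B2 F s t q); ring.
have d3 : (p%:Z %| 4 * e3 F r s t q ^+ 2)%Z.
  have -> : 4 * e3 F r s t q ^+ 2 = Ay3 F s t q ^+ 2 by rewrite A3; ring.
  rewrite Ay3E HG Hd; apply/dvdzP; exists (A33 F * 4 * c%:Z - 2 * B3 F s t q); ring.
apply: (core _ _ _ _ _ _ Pp p3 Pc d1 d2 d3).
apply: (@mulfI _ 4) => //.
rewrite -F2E -A1 -A2 -A3 FAyE HG Hd; ring.
Qed.

Lemma bwd_omega (p c : nat) F f : prime p -> (3 < p)%N -> prime c -> tform_disc F = p%:Z ->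
  ((c%:Z * p%:Z) %% 4 = 3)%Z ->
  inj_ring_hom_into_clf F (zomega_mul (c%:Z * p%:Z)) f -> properly_represents F (2 * c%:Z).
Proof.
move=> Pp p3 Pc Hd Hmod Hf.
set m := ((1 + c%:Z * p%:Z) %/ 4)%Z.
have HD : c%:Z * p%:Z = 4 * m - 1.
  move: Hmod; rewrite /m; set D := c%:Z * p%:Z; lia.
have fI := f_int _ _ _ Hf.
case: Hf => f1 fadd fmul finj.
have := fmul (0,1) (0,1).
have -> : zomega_mul (c%:Z * p%:Z) (0,1) (0,1) = pair_add (- m, 0) (0, 1).
  by rewrite /zomega_mul /pair_add /=; congr (_,_); rewrite -/m; ring.
rewrite fadd fI.
case Ea: (f (0,1)) => [[[r s] t] q].
rewrite sqrE /clf_add => -[H0 H1 H2 H3].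
have nz : ~ (s = 0 /\ t = 0 /\ q = 0).
  case=> s0 [t0 q0].
  have : f (0,1) = f (r,0) by rewrite Ea fI s0 t0 q0.
  move/finj => -[_ H]; move: H; lia.
have hh : 2 * r + Tr F s t q = 1.
  apply/eqP; apply/negPn/negP => Hne; apply: nz.
  have Hne' : (2 * r + Tr F s t q - 1 != 0) by rewrite subr_eq0.
  have k : forall x, 0 + x = (2 * r + Tr F s t q) * x -> x = 0.
    move=> x Hx; apply: (mulfI Hne'); rewrite mulr0 mulrBl mul1r -Hx add0r subrr //.
  by split; [exact: k H1 | split; [exact: k H2 | exact: k H3]].
have HT : Tr F s t q = 1 - 2 * r by move: hh; lia.
have HN : Nm F s t q = r ^+ 2 + m - r.
  have -> : Nm F s t q = r ^+ 2 - (r ^+ 2 - Nm F s t q) by ring.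
  rewrite -H0; ring.
have HG : Gf F s t q = c%:Z * p%:Z by rewrite GE HN HT HD; ring.
have d1 : (p%:Z %| 4 * Ay1 F s t q ^+ 2)%Z.
  rewrite Ay1E HG Hd; apply/dvdzP; exists (4 * (A11 F * c%:Z - 2 * B1 F s t q)); ring.
have d2 : (p%:Z %| 4 * Ay2 F s t q ^+ 2)%Z.
  rewrite Ay2E HG Hd; apply/dvdzP; exists (4 * (A22 F * c%:Z - 2 * B2 F s t q)); ring.
have d3 : (p%:Z %| 4 * Ay3 F s t q ^+ 2)%Z.
  rewrite Ay3E HG Hd; apply/dvdzP; exists (4 * (A33 F * c%:Z - 2 * B3 F s t q)); ring.
apply: (core _ _ _ _ _ _ Pp p3 Pc d1 d2 d3).
rewrite FAyE HG Hd; ring.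
Qed.

Theorem mainTheorem6 (p c : nat) (F : tform) :
  prime p -> (3 < p)%N ->
  tform_posdef F -> tform_disc F = p%:Z ->
  prime c -> (16 * c < 3 * p)%N ->
  properly_represents F (2 * c%:Z) <->
  (oriented_sqrt F (c%:Z * p%:Z) \/ oriented_omega F (c%:Z * p%:Z)).
Proof.
move=> Pp p3 _ Hd Pc _; split.
  case=> x [y [z [_ Hf]]]; left; exact: (fwd _ _ _ _ _ _ Hd (prime_gt0 Pc) Hf).
case=> [[f Hf]|[Hmod [f Hf]]].
  exact: (bwd_sqrt _ _ _ _ Pp p3 Pc Hd Hf).
exact: (bwd_omega _ _ _ _ Pp p3 Pc Hd Hmod Hf).
Qed.
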